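(* Let $\ell\ge1$, $0<\delta\le1/2$, $\alpha\in\mathbb T$, $R=\{n\in\mathbb N:\|n^\ell\alpha\|>\delta\}$, and $m=\lceil 2^{\ell-1}\delta^{-1}\rceil$. Then $R$ is not $m$-large.
   Context: $\|t\|$ is the distance to the nearest integer. For $m\ge2$, $R\subset\mathbb N$ is $m$-large if every coloring of $\mathbb N$ with $m$ colors contains arbitrarily long monochromatic arithmetic progressions with common difference in $R$. *)

(* Defs.v *)
From Stdlib Require Import Reals ZArith Arith Lia.
Open Scope R_scope.

(* Distance to the nearest integer: ||t|| = min(frac t, 1 - frac t),
   where Int_part t is the floor of t. *)
Definition dist_nearest (t : R) : R :=
  Rmin (t - IZR (Int_part t)) (1 - (t - IZR (Int_part t))).

Definition Rceil (x : R) : Z := (- Int_part (- x))%Z.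

(* Positive integers are ℕ = {1,2,...}. *)
Definition m_large (m : nat) (RS : nat -> Prop) : Prop :=
  forall c : nat -> nat, (forall n, (c n < m)%nat) ->
  forall k : nat, exists a d : nat,
    (1 <= a)%nat /\ RS d /\
    forall i : nat, (i < k)%nat -> c (a + i * d)%nat = c a.

(* Main.v *)
Require Import Defs.
From Stdlib Require Import Reals ZArith Arith Lia Lra.
Open Scope R_scope.

Lemma C_nn n : C n n = 1.
Proof. unfold C. rewrite Nat.sub_diag. simpl fact. simpl INR.
  field. apply INR_fact_neq_0. Qed.

Lemma C_Snn n : C (S n) n = INR (S n).
Proof. unfold C. replace (S n - n)%nat with 1%nat by lia.
  change (fact (S n)) with (S n * fact n)%nat. rewrite mult_INR. simpl fact. simpl INR.
  field. apply INR_fact_neq_0. Qed.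

Definition D1 (d:R) (h:R->R) := fun x => h (x+d) - h x.
Fixpoint D (d:R) (j:nat) (h:R->R) : R->R :=
  match j with O => h | S j => D d j (D1 d h) end.

Lemma D_ext d j : forall h h', (forall x, h x = h' x) -> forall x, D d j h x = D d j h' x.
Proof. induction j; intros h h' H x; simpl. apply H.
  apply IHj. intro y. unfold D1. rewrite !H. reflexivity. Qed.

Lemma D_lin d j : forall f g x, D d j (fun y => f y - g y) x = D d j f x - D d j g x.
Proof. induction j; intros f g x; simpl. reflexivity.
  rewrite <- IHj. apply D_ext. intro y. unfold D1. ring. Qed.

Lemma D_int d j : forall g, (forall x, exists z, g x = IZR z) -> forall x, exists z, D d j g x = IZR z.
Proof. induction j; intros g H x; simpl. apply H.
  apply IHj. intro y. unfold D1. destruct (H (y+d)) as [z1 e1]. destruct (H y) as [z2 e2].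
  exists (z1 - z2)%Z. rewrite e1, e2, minus_IZR. reflexivity. Qed.

Lemma D_bound d j : forall h A x, (forall i, (i <= j)%nat -> Rabs (h (x + INR i * d)) < A) ->
  Rabs (D d j h x) < 2 ^ j * A.
Proof. induction j; intros h A x H; simpl.
  - specialize (H 0%nat (le_n 0)). simpl in H. replace (x + 0 * d) with x in H by ring. lra.
  - replace (2 * 2 ^ j * A) with (2 ^ j * (2 * A)) by ring. apply IHj.
    intros i Hi. unfold D1.
    pose proof (H (S i) ltac:(lia)) as H1. pose proof (H i ltac:(lia)) as H2.
    rewrite S_INR in H1. replace (x + (INR i + 1) * d) with (x + INR i * d + d) in H1 by ring.
    eapply Rle_lt_trans. apply Rabs_triang. rewrite Rabs_Ropp. lra.
Qed.

Fixpoint Q (n:nat) (f:R->R) : Prop :=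
  match n with
  | O => exists c, forall x, f x = c
  | S n => exists c g, Q n g /\ forall x, f x = c * x ^ (S n) + g x
  end.

Lemma Q_mono n f : Q n f -> Q (S n) f.
Proof. intro H. simpl. exists 0, f. split; auto. intro; ring. Qed.

Lemma Q_ext n : forall f f', Q n f -> (forall x, f x = f' x) -> Q n f'.
Proof. destruct n; simpl; intros f f' H E.
  - destruct H as [c Hc]. exists c. intro x. rewrite <- E. auto.
  - destruct H as [c [g [Hg Hf]]]. exists c, g. split; auto. intro x; rewrite <- E; auto. Qed.

Lemma Q_const n c : Q n (fun _ => c).
Proof. induction n. simpl; exists c; auto. apply Q_mono; auto. Qed.

Lemma Q_add n : forall f g, Q n f -> Q n g -> Q n (fun x => f x + g x).
Proof. induction n; simpl; intros f g Hf Hg.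
  - destruct Hf as [a Ha], Hg as [b Hb]. exists (a+b). intro; rewrite Ha, Hb; auto.
  - destruct Hf as [a [f' [Hf' Ef]]], Hg as [b [g' [Hg' Eg]]].
    exists (a+b), (fun x => f' x + g' x). split. auto. intro x; rewrite Ef, Eg; ring. Qed.

Lemma Q_scal n k : forall f, Q n f -> Q n (fun x => k * f x).
Proof. induction n; simpl; intros f Hf.
  - destruct Hf as [a Ha]. exists (k*a). intro; rewrite Ha; auto.
  - destruct Hf as [a [f' [Hf' Ef]]]. exists (k*a), (fun x => k * f' x). split. auto.
    intro x; rewrite Ef; ring. Qed.

Lemma Q_pow n : forall i, (i <= n)%nat -> Q n (fun x => x ^ i).
Proof. induction n; intros i Hi.
  - assert (i = 0%nat) by lia. subst. simpl. exists 1. auto.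
  - destruct (Nat.eq_dec i (S n)). subst. simpl. exists 1, (fun _ => 0). split.
    apply Q_const. intro; ring.
    apply Q_mono. apply IHn. lia. Qed.

Lemma Q_sum n (F : nat -> R -> R) N : (forall i, (i <= N)%nat -> Q n (F i)) ->
  Q n (fun x => sum_f_R0 (fun i => F i x) N).
Proof. induction N; intro H; simpl. apply H; auto.
  apply Q_add. apply IHN. intros; apply H; lia. apply H; lia. Qed.

Lemma binom_eq n d x : (x + d) ^ S n - x ^ S n =
  sum_f_R0 (fun i => C (S n) i * x ^ i * d ^ (S n - i)) n.
Proof. rewrite binomial, tech5, C_nn, Nat.sub_diag. simpl (d ^ 0). ring. Qed.

Lemma binom_low n d : Q n (fun x => (x + d) ^ S n - x ^ S n).
Proof. eapply Q_ext. 2:{ intro x. symmetry. apply binom_eq. }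
  apply Q_sum. intros i Hi. eapply Q_ext. apply (Q_scal n (C (S n) i * d ^ (S n - i))).
  apply Q_pow. exact Hi. intro; simpl; ring. Qed.

Lemma Q_shift n d : forall f, Q n f -> Q n (fun x => f (x + d)).
Proof. induction n; simpl; intros f Hf.
  - destruct Hf as [a Ha]. exists a. auto.
  - destruct Hf as [a [g [Hg Ef]]].
    exists a, (fun x => a * ((x + d) ^ S n - x ^ S n) + g (x + d)). split.
    + apply Q_add. apply Q_scal. apply binom_low. apply IHn; auto.
    + intro x. rewrite (Ef (x + d)). simpl. ring. Qed.

Lemma Q_D1 n d f : Q n f -> Q n (D1 d f).
Proof. intro H. unfold D1. eapply Q_ext. apply Q_add. apply (Q_shift n d), H.
  apply (Q_scal n (-1)), H. intro x. simpl. ring. Qed.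

Lemma Q_drop k d g : Q (S k) g -> Q k (D1 d g).
Proof. simpl. intros [c [g' [Hg' E]]]. unfold D1. eapply Q_ext.
  apply Q_add. apply (Q_scal k c). apply (binom_low k d). apply (Q_D1 k d g' Hg').
  intro x. unfold D1. rewrite !E. simpl. ring. Qed.

Lemma D_lead d n : forall c f g, Q n g -> (forall x, f x = c * x ^ S n + g x) ->
  forall x, D d (S n) f x = c * INR (fact (S n)) * d ^ S n.
Proof. induction n; intros c f g Hg Ef x.
  - simpl. unfold D1. destruct Hg as [a Ha]. rewrite !Ef, !Ha. simpl. ring.
  - change (D d (S (S n)) f x) with (D d (S n) (D1 d f) x).
    set (G := fun y => c * sum_f_R0 (fun i => C (S (S n)) i * y ^ i * d ^ (S (S n) - i)) n
                       + D1 d g y).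
    rewrite (IHn (c * INR (S (S n)) * d) (D1 d f) G).
    + change (fact (S (S n))) with (S (S n) * fact (S n))%nat. rewrite mult_INR. simpl. ring.
    + unfold G. apply Q_add. apply Q_scal. apply Q_sum. intros i Hi.
      eapply Q_ext. apply (Q_scal n (C (S (S n)) i * d ^ (S (S n) - i))).
      apply Q_pow. exact Hi. intro; simpl; ring.
      apply Q_drop. exact Hg.
    + intro y. unfold G, D1. rewrite !Ef.
      replace (c * (y + d) ^ S (S n) + g (y + d) - (c * y ^ S (S n) + g y))
        with (c * ((y + d) ^ S (S n) - y ^ S (S n)) + (g (y + d) - g y)) by ring.
      rewrite binom_eq, tech5, C_Snn. replace (S (S n) - S n)%nat with 1%nat by lia.
      simpl. ring.
Qed.


Lemma Int_part_unique k t : IZR k <= t < IZR k + 1 -> Int_part t = k.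
Proof. intros [H1 H2]. destruct (base_Int_part t) as [B1 B2].
  assert (A1 : IZR (Int_part t) < IZR (k + 1)) by (rewrite plus_IZR; simpl; lra).
  assert (A2 : IZR k < IZR (Int_part t + 1)) by (rewrite plus_IZR; simpl; lra).
  apply lt_IZR in A1. apply lt_IZR in A2. lia. Qed.

Lemma frac_bounds t : 0 <= t - IZR (Int_part t) < 1.
Proof. destruct (base_Int_part t). lra. Qed.

Lemma dist_small delta z e t : t = IZR z + e -> Rabs e < delta -> delta <= 1/2 ->
  dist_nearest t < delta.
Proof. intros Ht He Hd. unfold dist_nearest.
  destruct (Rle_lt_dec 0 e).
  - rewrite Rabs_right in He by lra.
    rewrite (Int_part_unique z t) by lra.
    eapply Rle_lt_trans. apply Rmin_l. lra.
  - rewrite Rabs_left in He by lra.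
    rewrite (Int_part_unique (z - 1) t) by (rewrite minus_IZR; simpl; lra).
    rewrite minus_IZR. eapply Rle_lt_trans. apply Rmin_r. simpl. lra. Qed.

Lemma Rceil_ge x : x <= IZR (Rceil x).
Proof. unfold Rceil. rewrite opp_IZR. destruct (base_Int_part (- x)). lra. Qed.

Theorem mainTheorem19 (l : nat) (delta alpha : R)
  (hl : (1 <= l)%nat) (hd0 : 0 < delta) (hd1 : delta <= 1 / 2) :
  ~ m_large (Z.to_nat (Rceil (2 ^ (l - 1) / delta)))
      (fun n : nat => (1 <= n)%nat /\ dist_nearest (INR n ^ l * alpha) > delta).
Proof.
  destruct l as [|j]. lia.
  replace (S j - 1)%nat with j by lia.
  set (m := Z.to_nat (Rceil (2 ^ j / delta))).
  set (M := INR m).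
  assert (HM : 2 ^ j / delta <= M).
  { unfold M, m. rewrite INR_IZR_INZ, Z2Nat.id. apply Rceil_ge.
    apply le_IZR. eapply Rle_trans. 2: apply Rceil_ge.
    apply Rlt_le. apply Rdiv_lt_0_compat. apply pow_lt; lra. lra. }
  assert (HM0 : 0 < M).
  { eapply Rlt_le_trans. 2: exact HM. apply Rdiv_lt_0_compat. apply pow_lt; lra. lra. }
  assert (Hw : 2 ^ j * / M <= delta).
  { apply (Rmult_le_reg_r M). lra. rewrite Rmult_assoc, Rinv_l by lra.
    apply (Rmult_le_reg_r (/ delta)). apply Rinv_0_lt_compat; lra.
    replace (delta * M * / delta) with M by (field; lra). lra. }
  set (beta := alpha / INR (fact (S j))).
  set (f := fun x : R => beta * x ^ S j).
  set (g := fun x : R => IZR (Int_part (f x))).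
  set (h := fun x : R => f x - g x).
  set (col := fun n : nat => Z.to_nat (Int_part (M * h (INR n)))).
  assert (Hcol0 : forall n, (0 <= Int_part (M * h (INR n)))%Z /\
                            (Int_part (M * h (INR n)) < Z.of_nat m)%Z).
  { intro n. pose proof (frac_bounds (f (INR n))) as Fb.
    fold (g (INR n)) in Fb. fold (h (INR n)) in Fb.
    destruct (base_Int_part (M * h (INR n))) as [B1 B2].
    assert (0 <= M * h (INR n) < M) by (split; [apply Rmult_le_pos|]; nra).
    split.
    - assert (IZR (-1) < IZR (Int_part (M * h (INR n)))) by (simpl; lra).
      apply lt_IZR in H0. lia.
    - apply lt_IZR. rewrite <- INR_IZR_INZ. fold M. lra. }
  assert (Hcol : forall n, (col n < m)%nat).
  { intro n. destruct (Hcol0 n). unfold col. lia. }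
  intro Hlarge.
  destruct (Hlarge col Hcol (S (S j))) as [a [d [Ha [[Hd Hdist] Hap]]]].
  set (x0 := INR a). set (dd := INR d).
  set (z0 := Int_part (M * h x0)).
  assert (Hwin : forall i, (i <= S j)%nat ->
     IZR z0 / M <= h (x0 + INR i * dd) < IZR z0 / M + / M).
  { intro i. intro Hi.
    assert (E : x0 + INR i * dd = INR (a + i * d)) by (unfold x0, dd; rewrite plus_INR, mult_INR; ring).
    rewrite E.
    assert (Hc : col (a + i * d)%nat = col a) by (apply Hap; lia).
    unfold col in Hc. destruct (Hcol0 (a + i * d)%nat). destruct (Hcol0 a).
    assert (Z : Int_part (M * h (INR (a + i * d))) = z0) by (unfold z0, x0; lia).
    destruct (base_Int_part (M * h (INR (a + i * d)))) as [B1 B2]. rewrite Z in B1, B2.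
    split.
    - apply (Rmult_le_reg_l M). lra. field_simplify. lra. lra.
    - apply (Rmult_lt_reg_l M). lra. field_simplify. lra. lra. }
  assert (Hb : Rabs (D dd (S j) h x0) < 2 ^ j * / M).
  { simpl. apply D_bound. intros i Hi. unfold D1.
    pose proof (Hwin (S i) ltac:(lia)) as W1. pose proof (Hwin i ltac:(lia)) as W2.
    rewrite S_INR in W1. replace (x0 + (INR i + 1) * dd) with (x0 + INR i * dd + dd) in W1 by ring.
    apply Rabs_def1; lra. }
  assert (Hf : D dd (S j) f x0 = alpha * dd ^ S j).
  { rewrite (D_lead dd j beta f (fun _ => 0)). unfold beta. field. apply INR_fact_neq_0.
    apply Q_const. intro x. unfold f. ring. }
  destruct (D_int dd (S j) g (fun x => ex_intro _ _ eq_refl) x0) as [z Hz].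
  assert (Hh : D dd (S j) h x0 = D dd (S j) f x0 - D dd (S j) g x0) by (apply D_lin).
  assert (dist_nearest (INR d ^ S j * alpha) < delta).
  { apply (dist_small delta z (D dd (S j) h x0)).
    - rewrite Hh, Hf, Hz. fold dd. ring.
    - lra.
    - exact hd1. }
  lra.
Qed.
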